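(* Let $\mathcal{Y}$ be a linear subspace of $\mathbb{R}^n$ and let $\mathbf{L}\in\widehat{\mathcal{Y}}$ satisfy $\mathbf{L}(x)\preceq\mathbf{C}\odot\|x\|$ for all $x\in\mathcal{Y}$, where $\mathbf{C}$ is a closed bounded interval. Then $\|\mathbf{L}(x)\|_{I(\mathbb{R})}\le\|\mathbf{C}\|_{I(\mathbb{R})}\|x\|$ for all $x\in\mathcal{Y}$.
   Context: $I(\mathbb{R})$: nonempty compact intervals $\mathbf{A}=[\underline{a},\overline{a}]$; $\mathbf{A}\oplus\mathbf{B}=[\underline{a}+\underline{b},\overline{a}+\overline{b}]$; $\lambda\odot\mathbf{A}=[\min\{\lambda\underline{a},\lambda\overline{a}\},\max\{\lambda\underline{a},\lambda\overline{a}\}]$; $\mathbf{A}\ominus_{gH}\mathbf{B}=[\min\{\underline{a}-\underline{b},\overline{a}-\overline{b}\},\max\{\underline{a}-\underline{b},\overline{a}-\overline{b}\}]$; $\mathbf{A}\preceq\mathbf{B}$ iff $\underline{a}\le\underline{b}$ and $\overline{a}\le\overline{b}$; $\|\mathbf{A}\|_{I(\mathbb{R})}=\max\{|\underline{a}|,|\overline{a}|\}$; $\|\cdot\|$ is the Euclidean norm. An IVF $\mathbf{L}:\mathcal{Y}\to I(\mathbb{R})$ on a linear subspace is linear if (i) $\mathbf{L}(\lambda x)=\lambda\odot\mathbf{L}(x)$ for all $x\in\mathcal{Y}$, $\lambda\in\mathbb{R}$, and (ii) for all $x,y\in\mathcal{Y}$, either $\mathbf{L}(x)\oplus\mathbf{L}(y)=\mathbf{L}(x+y)$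 or neither of $\mathbf{L}(x)\oplus\mathbf{L}(y)$ and $\mathbf{L}(x+y)$ dominates the other w.r.t. $\preceq$. It is $gH$-continuous if $\lim_{\|d\|\to0}(\mathbf{L}(x+d)\ominus_{gH}\mathbf{L}(x))=\mathbf{0}$ at every $x$. $\widehat{\mathcal{Y}}$ denotes the set of all $gH$-continuous linear IVFs on $\mathcal{Y}$. *)

(* Defs.v *)
From HB Require Import structures.
From mathcomp Require Import all_boot all_order all_algebra.
From mathcomp Require Import reals.
Set Implicit Arguments. Unset Strict Implicit. Unset Printing Implicit Defensive.
Import Order.TTheory GRing.Theory Num.Theory.
Local Open Scope ring_scope.

Section Intervals.
Variable R : realType.

Record Itv := MkItv { lo : R; hi : R; lo_le_hi : lo <= hi }.

Lemma min_le_max_aux (a b : R) : Num.min a b <= Num.max a b.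
Proof. by rewrite ge_min !le_max lexx. Qed.

Lemma add_ok (A B : Itv) : lo A + lo B <= hi A + hi B.
Proof. by apply: lerD; apply: lo_le_hi. Qed.

Definition itv_add (A B : Itv) : Itv := MkItv (add_ok A B).

Definition itv_scale (l : R) (A : Itv) : Itv :=
  MkItv (min_le_max_aux (l * lo A) (l * hi A)).

Definition itv_gHsub (A B : Itv) : Itv :=
  MkItv (min_le_max_aux (lo A - lo B) (hi A - hi B)).

Definition itv_le (A B : Itv) : Prop := lo A <= lo B /\ hi A <= hi B.

Definition itv_norm (A : Itv) : R := Num.max `|lo A| `|hi A|.

End Intervals.

Arguments Itv : clear implicits.

Definition enorm (R : realType) (n : nat) (x : 'rV[R]_n) : R :=
  Num.sqrt (\sum_(i < n) x ord0 i ^+ 2).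

Definition ivf_linear (R : realType) (n : nat) (Y : {vspace 'rV[R]_n})
    (L : 'rV[R]_n -> Itv R) : Prop :=
  (forall x, x \in Y -> forall l : R, L (l *: x) = itv_scale l (L x)) /\
  (forall x y, x \in Y -> y \in Y ->
     itv_add (L x) (L y) = L (x + y) \/
     (~ itv_le (itv_add (L x) (L y)) (L (x + y)) /\
      ~ itv_le (L (x + y)) (itv_add (L x) (L y)))).

Definition ivf_gH_continuous (R : realType) (n : nat) (Y : {vspace 'rV[R]_n})
    (L : 'rV[R]_n -> Itv R) : Prop :=
  forall x, x \in Y -> forall eps : R, 0 < eps -> exists2 delta : R, 0 < delta &
    forall d, d \in Y -> enorm d < delta ->
      itv_norm (itv_gHsub (L (x + d)) (L x)) < eps.

Definition Yhat (R : realType) (n : nat) (Y : {vspace 'rV[R]_n})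
    (L : 'rV[R]_n -> Itv R) : Prop :=
  ivf_linear Y L /\ ivf_gH_continuous Y L.

(* Main.v *)
Require Import Defs.
From HB Require Import structures.
From mathcomp Require Import all_boot all_order all_algebra.
From mathcomp Require Import reals.
From mathcomp Require Import lra.
Import Order.TTheory GRing.Theory Num.Theory.
Local Open Scope ring_scope.

Lemma enormN (R : realType) (n : nat) (x : 'rV[R]_n) : enorm (- x) = enorm x.
Proof.
rewrite /enorm; congr Num.sqrt; apply: eq_bigr => i _.
by rewrite mxE sqrrN.
Qed.

Lemma enorm_ge0 (R : realType) (n : nat) (x : 'rV[R]_n) : 0 <= enorm x.
Proof. exact: sqrtr_ge0. Qed.

Theorem mainTheorem3 (R : realType) (n : nat) (Y : {vspace 'rV[R]_n})
    (L : 'rV[R]_n -> Itv R) (C : Itv R) :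
  Yhat Y L ->
  (forall x, x \in Y -> itv_le (L x) (itv_scale (enorm x) C)) ->
  forall x, x \in Y -> itv_norm (L x) <= itv_norm C * enorm x.
Proof.
move=> [[Hs _] _] H x xY.
have xN : - x \in Y by rewrite memvN.
have [h1 h2] := H x xY.
have [h3 h4] := H _ xN.
have eN : L (- x) = itv_scale (-1) (L x) by rewrite -Hs // scaleN1r.
rewrite eN enormN /= in h3 h4.
rewrite /= in h1 h2.
set t := enorm x in h1 h2 h3 h4 *.
have t0 : 0 <= t by exact: sqrtr_ge0.
have LC := lo_le_hi C.
have LL := lo_le_hi (L x).
have tC : t * lo C <= t * hi C by apply: ler_wpM2l.
move: h1 h2 h3 h4.
rewrite /itv_norm.
set a := lo (L x); set b := hi (L x); set c := lo C; set d := hi C.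
move: tC LC LL; rewrite -/a -/b -/c -/d => tC LC LL.
rewrite !mulN1r.
have m1 : Num.max (t * c) (t * d) = t * d by apply/max_idPr.
have m2 : Num.min (-a) (-b) = -b by apply/min_idPr; rewrite lerN2.
rewrite m1 m2 => h1 h2 h3 h4.
have h1' : a <= t * c by move: h1; rewrite le_min => /andP[].
have h3' : -b <= t * c by move: h3; rewrite le_min => /andP[].
have h4' : -a <= t * d by move: h4; rewrite ge_max => /andP[].
have Hc : `|c| <= Num.max `|c| `|d| by rewrite le_max lexx.
have Hd : `|d| <= Num.max `|c| `|d| by rewrite le_max lexx orbT.
set m := Num.max `|c| `|d| in Hc Hd *.
move: Hc Hd; rewrite !ler_norml => /andP[c1 c2] /andP[d1 d2].
have tc1 : t * c <= m * t by rewrite [t * c]mulrC ler_wpM2r.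
have tc2 : - (m * t) <= t * c by rewrite -mulNr [t * c]mulrC ler_wpM2r.
have td1 : t * d <= m * t by rewrite [t * d]mulrC ler_wpM2r.
have td2 : - (m * t) <= t * d by rewrite -mulNr [t * d]mulrC ler_wpM2r.
rewrite ge_max !ler_norml; apply/andP; split; apply/andP; split; lra.
Qed.
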